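(* Consider periods $t=0,1,\dots,T$ with treatment statuses $D_0,D_1,\dots,D_T\in\{0,1\}$, $D_0=0$, observed outcomes $Y_t$ and potential outcomes $Y_t(0,d_1,\dots,d_T)$ for each path $(0,d_1,\dots,d_T)\in\{0\}\times\{0,1\}^T$, such that $$Y_t=\sum_{(d_1,\dots,d_T)\in\{0,1\}^T}Y_t(0,d_1,\dots,d_T)\,\mathbf 1\{D_0=0,D_1=d_1,\dots,D_T=d_T\},$$ and let $\mathcal I_0$ be a set of pre-treatment periods $\iota_0$, in each of which the outcome equals the untreated potential outcome $Y_{\iota_0}(0)$ for all units. Fix two paths $\mathbf d=(0,d_1,\dots,d_T)$ and $\mathbf d'=(0,d'_1,\dots,d'_T)$ and write $\mathbf D=(D_0,\dots,D_T)$. For $t\ge1$ define $$ATT_t=\mathbb E[Y_t(\mathbf d)-Y_t(\mathbf d')\mid \mathbf D=\mathbf d],\qquad \theta^t_{DIM}=\mathbb E[Y_t\mid \mathbf D=\mathbf d]-\mathbb E[Y_t\mid \mathbf D=\mathbf d'],$$ $$SB_t=\mathbb E[Y_t(\mathbf d')\mid \mathbf D=\mathbf d]-\mathbb E[Y_t(\mathbf d')\mid \mathbf D=\mathbf d'],$$ and for $\iota_0\in\mathcal I_0$, $$SB_{\iota_0}=\mathbb E[Y_{\iota_0}(0)\mid \mathbf D=\mathbf d]-\mathbb E[Y_{\iota_0}(0)\mid \mathbf D=\mathbf d'].$$ Assume (extended bias set stability) that for each $t$, $SB_t\in\big[\inf_{\iota_0\in\mathcal I_0}SB_{\iota_0},\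 \sup_{\iota_0\in\mathcal I_0}SB_{\iota_0}\big]$. Then $$ATT_t\in\Big[\theta^t_{DIM}-\sup_{\iota_0\in\mathcal I_0}SB_{\iota_0},\ \theta^t_{DIM}-\inf_{\iota_0\in\mathcal I_0}SB_{\iota_0}\Big]\equiv\Theta_I^t,$$ and these bounds are sharp: $\Theta_I^t$ is the identified set for $ATT_t$, i.e. every value in $\Theta_I^t$ is attained by some joint distribution of latent and observed variables consistent with the observed data distribution and the assumptions.
   Context: All conditional expectations are assumed to exist, and the conditioning events $\{\mathbf D=\mathbf d\}$, $\{\mathbf D=\mathbf d'\}$ have positive probability. $ATT_t$ is the average effect in period $t$, for units following path $\mathbf d$, of following $\mathbf d$ rather than $\mathbf d'$. *)

(* Defs.v *)
From HB Require Import structures.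
From mathcomp Require Import all_boot all_order all_algebra.
From mathcomp Require Import all_classical all_reals all_analysis.
Set Implicit Arguments. Unset Strict Implicit. Unset Printing Implicit Defensive.
Import Order.TTheory GRing.Theory Num.Theory.
Local Open Scope classical_set_scope.
Local Open Scope ring_scope.

Section DiD.
Context {R : realType} {T : nat} {I0 : finType}
        {dsp : measure_display} {Omega : measurableType dsp}.

(* A treatment path (0,d_1,...,d_T): D_0 = 0 is fixed, so a path is
   determined by (d_1,...,d_T) : {ffun 'I_T -> bool}.  Period k : 'I_T
   stands for period k+1. *)
Definition path := {ffun 'I_T -> bool}.

Definition Dvec (D : 'I_T -> Omega -> bool) (w : Omega) : path :=
  [ffun k => D k w].

Definition evt (D : 'I_T -> Omega -> bool) (d : path) : set Omega :=
  [set w | Dvec D w = d].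

Definition cexp (P : probability Omega R) (A : set Omega) (X : Omega -> R) : R :=
  Rintegral P A X / fine (P A).

Definition SBpre (P : probability Omega R) (D : 'I_T -> Omega -> bool)
  (Ypre0 : I0 -> Omega -> R) (d d' : path) (i : I0) : R :=
  cexp P (evt D d) (Ypre0 i) - cexp P (evt D d') (Ypre0 i).

Definition SBt (P : probability Omega R) (D : 'I_T -> Omega -> bool)
  (Ypo : 'I_T.+1 -> path -> Omega -> R) (d d' : path) (t : 'I_T.+1) : R :=
  cexp P (evt D d) (Ypo t d') - cexp P (evt D d') (Ypo t d').

Definition ATT (P : probability Omega R) (D : 'I_T -> Omega -> bool)
  (Ypo : 'I_T.+1 -> path -> Omega -> R) (d d' : path) (t : 'I_T.+1) : R :=
  cexp P (evt D d) (fun w => Ypo t d w - Ypo t d' w).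

Definition thetaDIM (P : probability Omega R) (D : 'I_T -> Omega -> bool)
  (Y : 'I_T.+1 -> Omega -> R) (d d' : path) (t : 'I_T.+1) : R :=
  cexp P (evt D d) (Y t) - cexp P (evt D d') (Y t).

Definition SBsup (P : probability Omega R) (D : 'I_T -> Omega -> bool)
  (Ypre0 : I0 -> Omega -> R) (d d' : path) (i0 : I0) : R :=
  \big[Num.max/SBpre P D Ypre0 d d' i0]_(i : I0) SBpre P D Ypre0 d d' i.
Definition SBinf (P : probability Omega R) (D : 'I_T -> Omega -> bool)
  (Ypre0 : I0 -> Omega -> R) (d d' : path) (i0 : I0) : R :=
  \big[Num.min/SBpre P D Ypre0 d d' i0]_(i : I0) SBpre P D Ypre0 d d' i.

Definition model_assumptions (P : probability Omega R)
  (D : 'I_T -> Omega -> bool) (Y : 'I_T.+1 -> Omega -> R)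
  (Ypo : 'I_T.+1 -> path -> Omega -> R)
  (Ypre Ypre0 : I0 -> Omega -> R) (d d' : path) : Prop :=
  [/\ ((forall k, measurable (D k @^-1` [set true])) /\
       (forall t, measurable_fun setT (Y t)) /\
       (forall t p, measurable_fun setT (Ypo t p)) /\
       (forall i, measurable_fun setT (Ypre i) /\ measurable_fun setT (Ypre0 i))),
      (forall t w, Y t w = \sum_(p : path) Ypo t p w * (Dvec D w == p)%:R),
      (forall i w, Ypre i w = Ypre0 i w),
      (0 < P (evt D d))%E /\ (0 < P (evt D d'))%E &
      (forall A, A = evt D d \/ A = evt D d' ->
         (forall t, P.-integrable A (EFin \o Y t)) /\
         (forall t p, p = d \/ p = d' -> P.-integrable A (EFin \o Ypo t p)) /\
         (forall i, P.-integrable A (EFin \o Ypre0 i)))].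

Definition ext_BSS (P : probability Omega R) (D : 'I_T -> Omega -> bool)
  (Ypo : 'I_T.+1 -> path -> Omega -> R) (Ypre0 : I0 -> Omega -> R)
  (d d' : path) (i0 : I0) : Prop :=
  forall t : 'I_T.+1, (0 < t)%N ->
    SBinf P D Ypre0 d d' i0 <= SBt P D Ypo d d' t <= SBsup P D Ypre0 d d' i0.

End DiD.

(* Two models have the same distribution of observed data
   (D_1..D_T, Y_0..Y_T, (Y_i)_{i in I_0}): they agree on all measurable
   rectangles, which form a pi-system generating the product sigma-algebra,
   i.e. the joint laws coincide. *)
Definition same_observed_law {R : realType} {T : nat} {I0 : finType}
  {dsp1 : measure_display} {O1 : measurableType dsp1}
  {dsp2 : measure_display} {O2 : measurableType dsp2}
  (P1 : probability O1 R) (D1 : 'I_T -> O1 -> bool) (Y1 : 'I_T.+1 -> O1 -> R)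
  (Ypre1 : I0 -> O1 -> R)
  (P2 : probability O2 R) (D2 : 'I_T -> O2 -> bool) (Y2 : 'I_T.+1 -> O2 -> R)
  (Ypre2 : I0 -> O2 -> R) : Prop :=
  forall (p : {ffun 'I_T -> bool}) (B : 'I_T.+1 -> set R) (C : I0 -> set R),
    (forall t, measurable (B t)) -> (forall i, measurable (C i)) ->
    P1 [set w | Dvec D1 w = p /\ (forall t, B t (Y1 t w)) /\
                (forall i, C i (Ypre1 i w))]
    = P2 [set w | Dvec D2 w = p /\ (forall t, B t (Y2 t w)) /\
                  (forall i, C i (Ypre2 i w))].

(* Main.v *)
Require Import Defs.
From HB Require Import structures.
From mathcomp Require Import all_boot all_order all_algebra.
From mathcomp Require Import all_classical all_reals all_analysis.
From mathcomp Require Import ring lra measurable_realfun.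
Import Order.TTheory GRing.Theory Num.Theory.
Local Open Scope classical_set_scope.
Local Open Scope ring_scope.

Section H.
Context {R : realType} {dsp : measure_display} {Omega : measurableType dsp}.
Variable P : probability Omega R.

Lemma fineP_gt0 (A : set Omega) : measurable A -> (0 < P A)%E -> 0 < fine (P A).
Proof.
move=> mA PA; apply: fine_gt0; rewrite PA /=.
exact: (le_lt_trans (probability_le1 P mA) (ltry _)).
Qed.

Lemma cexp_addc (A : set Omega) f k : measurable A -> (0 < P A)%E ->
  P.-integrable A (EFin \o f) -> cexp P A (fun w => f w + k) = cexp P A f + k.
Proof.
move=> mA PA intf; rewrite /cexp RintegralD //; last exact: finite_measure_integrable_cst.
by rewrite Rintegral_cst // mulrDl mulfK // gt_eqF // fineP_gt0.
Qed.

Lemma cexpB (A : set Omega) f g : measurable A ->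
  P.-integrable A (EFin \o f) -> P.-integrable A (EFin \o g) ->
  cexp P A (fun w => f w - g w) = cexp P A f - cexp P A g.
Proof. by move=> mA intf intg; rewrite /cexp RintegralB // mulrBl. Qed.

Lemma eq_cexp (A : set Omega) f g : (forall w, A w -> f w = g w) ->
  cexp P A f = cexp P A g.
Proof. by move=> fg; rewrite /cexp; congr (_ / _); apply: eq_Rintegral => w /set_mem; apply: fg. Qed.
End H.

Lemma mevt {R : realType} {T : nat} {dsp : measure_display} {Omega : measurableType dsp}
  (D : 'I_T -> Omega -> bool) (d : {ffun 'I_T -> bool}) :
  (forall k, measurable (D k @^-1` [set true])) -> measurable (evt D d).
Proof.
move=> mD.
have -> : evt D d = \bigcap_(k in [set: 'I_T]) [set w | D k w = d k].
  apply/seteqP; split => w /=.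
    by move=> <- k _; rewrite /Dvec ffunE.
  by move=> H; apply/ffunP => k; rewrite ffunE; apply: H.
apply: fin_bigcap_measurable; first exact: finite_finset.
move=> k _; case: (d k).
  exact: mD k.
rewrite (_ : [set w | D k w = false] = ~` (D k @^-1` [set true])); first exact: measurableC.
by apply/seteqP; split => w /=; case: (D k w).
Qed.
Theorem proposition6 (R : realType) (T : nat) (I0 : finType) (i0 : I0)
  (dsp : measure_display) (Omega : measurableType dsp) (P : probability Omega R)
  (D : 'I_T -> Omega -> bool) (Y : 'I_T.+1 -> Omega -> R)
  (Ypo : 'I_T.+1 -> {ffun 'I_T -> bool} -> Omega -> R)
  (Ypre Ypre0 : I0 -> Omega -> R) (d d' : {ffun 'I_T -> bool}) :
  model_assumptions P D Y Ypo Ypre Ypre0 d d' ->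
  ext_BSS P D Ypo Ypre0 d d' i0 ->
  forall t : 'I_T.+1, (0 < t)%N ->
    (* ATT_t lies in Theta_I^t *)
    (thetaDIM P D Y d d' t - SBsup P D Ypre0 d d' i0 <= ATT P D Ypo d d' t
       <= thetaDIM P D Y d d' t - SBinf P D Ypre0 d d' i0)
    /\
    (* sharpness: every value of Theta_I^t is attained by some model
       consistent with the observed data distribution and the assumptions *)
    (forall theta : R,
       thetaDIM P D Y d d' t - SBsup P D Ypre0 d d' i0 <= theta
         <= thetaDIM P D Y d d' t - SBinf P D Ypre0 d d' i0 ->
       exists (dsp' : measure_display) (Omega' : measurableType dsp')
              (P' : probability Omega' R)
              (D' : 'I_T -> Omega' -> bool) (Y' : 'I_T.+1 -> Omega' -> R)
              (Ypo' : 'I_T.+1 -> {ffun 'I_T -> bool} -> Omega' -> R)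
              (Ypre' Ypre0' : I0 -> Omega' -> R),
         [/\ same_observed_law P D Y Ypre P' D' Y' Ypre',
             model_assumptions P' D' Y' Ypo' Ypre' Ypre0' d d',
             ext_BSS P' D' Ypo' Ypre0' d d' i0 &
             ATT P' D' Ypo' d d' t = theta]).
Proof.
move=> [[mD [mY [mYpo mYpre]]] HYeq Hpre [PA PA'] Hint] BSS t t0.
set A := evt D d; set A' := evt D d'.
have mA : measurable A by exact: mevt.
have mA' : measurable A' by exact: mevt.
have [IA [IpoA IpreA]] := Hint A (or_introl erefl).
have [IA' [IpoA' IpreA']] := Hint A' (or_intror erefl).
have IAd := IpoA t d (or_introl erefl).
have IAd' := IpoA t d' (or_intror erefl).
have IA'd' := IpoA' t d' (or_intror erefl).
have Yon : forall t' p w, Dvec D w = p -> Y t' w = Ypo t' p w.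
  move=> t' p w Hw; rewrite HYeq (bigD1 p) //= Hw eqxx mulr1 big1 ?addr0 //.
  by move=> q qp; rewrite eq_sym (negbTE qp) mulr0.
have keyATT : ATT P D Ypo d d' t = thetaDIM P D Y d d' t - SBt P D Ypo d d' t.
  rewrite /ATT /thetaDIM /SBt -/A -/A' cexpB //.
  rewrite (eq_cexp P A (Y t) (Ypo t d)) ?(eq_cexp P A' (Y t) (Ypo t d')).
  - by ring.
  - by move=> w; apply: Yon.
  - by move=> w; apply: Yon.
have [BSSl BSSr] := andP (BSS t t0).
split; first by apply/andP; split; rewrite keyATT; lra.
move=> theta /andP[thl thr].
have [dd'|dd'] := eqVneq d d'.
  subst d'.
  have S0 : forall i, SBpre P D Ypre0 d d i = 0 by move=> i; rewrite /SBpre subrr.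
  have Ssup : SBsup P D Ypre0 d d i0 = 0.
    by rewrite /SBsup; apply: (big_ind (fun x => x = 0)) => [|x y -> ->|i _]; by rewrite ?maxxx ?S0.
  have Sinf : SBinf P D Ypre0 d d i0 = 0.
    by rewrite /SBinf; apply: (big_ind (fun x => x = 0)) => [|x y -> ->|i _]; by rewrite ?minxx ?S0.
  have th0 : thetaDIM P D Y d d t = 0 by rewrite /thetaDIM subrr.
  rewrite Ssup Sinf th0 in thl thr.
  exists dsp, Omega, P, D, Y, Ypo, Ypre, Ypre0; split => //.
  rewrite /ATT (eq_cexp P A _ (fun _ => 0)); last by move=> w _; rewrite subrr.
  by rewrite /cexp Rintegral_cst // !mul0r; lra.
pose c := ATT P D Ypo d d' t - theta.
pose Ypo' := fun (t' : 'I_T.+1) (p : {ffun 'I_T -> bool}) =>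
  if (t' == t) && (p == d') then (fun w => Ypo t' p w + c * \1_A w) else Ypo t' p.
have Ypo'd : Ypo' t d = Ypo t d by rewrite /Ypo' (negbTE dd') andbF.
have Ypo'd' : Ypo' t d' = (fun w => Ypo t d' w + c * \1_A w) by rewrite /Ypo' !eqxx.
have Ypo'o : forall t', t' != t -> Ypo' t' d' = Ypo t' d'.
  by move=> t' tt'; rewrite /Ypo' (negbTE tt').
have indA : forall w, A w -> \1_A w = 1 :> R by move=> w Aw; rewrite indicE mem_set.
have indA' : forall w, A' w -> \1_A w = 0 :> R.
  move=> w A'w; rewrite indicE memNset // => Aw; move/eqP: dd'; apply.
  by rewrite -Aw -A'w.
have Iind : forall B, measurable B -> P.-integrable B (EFin \o (fun w => c * \1_A w)).
  move=> B mB; apply: (integrableZl mB c (f := EFin \o \1_A)).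
  apply: (integrableS measurableT) => //; exact: (integrable_indic P mA).
have IplusB : forall B f, measurable B -> P.-integrable B (EFin \o f) ->
    P.-integrable B (EFin \o (fun w => f w + c * \1_A w)).
  move=> B f mB If; apply: (eq_integrable mB _ _ _ (integrableD mB If (Iind B mB))) => //.
have SB'eq : SBt P D Ypo' d d' t = thetaDIM P D Y d d' t - theta.
  rewrite /SBt Ypo'd' -/A -/A'.
  rewrite (eq_cexp P A _ (fun w => Ypo t d' w + c)); last first.
    by move=> w Aw; rewrite indA // mulr1.
  rewrite (eq_cexp P A' _ (Ypo t d')); last first.
    by move=> w Aw; rewrite indA' // mulr0 addr0.
  rewrite cexp_addc //.
  have := keyATT; rewrite /SBt /c -/A -/A' => ->; ring.
exists dsp, Omega, P, D, Y, Ypo', Ypre, Ypre0; split => //.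
- split => //.
  + split => //; split => //; split => //.
    move=> t' p; rewrite /Ypo'; case: ifP => _ //.
    apply: measurable_funD => //; apply: measurable_funM => //.
  + move=> t' w; rewrite HYeq; apply: eq_bigr => p _; rewrite /Ypo'.
    case: ifP => // /andP[_ /eqP ->].
    have [E|] := eqVneq (Dvec D w) d'; last by rewrite !mulr0.
    by rewrite indA' // mulr0 addr0.
  + move=> B HB; have mB : measurable B by case: HB => ->.
    have [IB [IpoB IpreB]] := Hint B HB.
    split => //; split => // t' p Hp; rewrite /Ypo'; case: ifP => _;
      [apply: IplusB => //|]; exact: IpoB.
- move=> t' t'0; have [->|tt'] := eqVneq t' t.
    by rewrite SB'eq; apply/andP; split; lra.
  by rewrite /SBt Ypo'o //; apply: BSS.
- rewrite /ATT Ypo'd Ypo'd' -/A.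
  rewrite (eq_cexp P A _ (fun w => (Ypo t d w - Ypo t d' w) + - c)); last first.
    by move=> w Aw; rewrite indA // mulr1 opprD addrA.
  rewrite cexp_addc //.
  by rewrite /c /ATT; ring.
apply: (eq_integrable mA _ _ _ (integrableB mA IAd IAd')) => w _.
by rewrite /= EFinB.
Qed.
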